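(* Let $A=\mathrm{diag}([-1],G_1,\dots,G_m,[1])\in\mathbb{R}^{n\times n}$, $m\geq 1$, where each of the $1\times1$ blocks $[-1]$ and $[1]$ may or may not be present, with $G_j=\begin{bmatrix}c_j&s_j\\-s_j&c_j\end{bmatrix}$, $c_j^2+s_j^2=1$, $s_j\neq 0$, and $-1=c_0<c_1<c_2<\cdots<c_m<1=c_{m+1}$. Let $v_0\in\mathbb{R}^n$ be a unit norm vector with $d(A,v_0)\geq 2$. Suppose that $v_0^{(\ell)}\neq 0$ for some $\ell$ with $1\leq\ell\leq m$, and that $v_0^{(j)}\neq 0$ for some block index $j$ with $0\leq j\leq m+1$ (for a block that is present) such that $c_\ell c_j\leq 0$. Then for the iteration ACI($1$) below, $\alpha_k\to 0$ and $\beta_k\to 0$ as $k\to\infty$.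
   Context: Block partitioning: every $v\in\mathbb{R}^n$ is written as $v=[v^{(0)};v^{(1)};\dots;v^{(m)};v^{(m+1)}]$ with $v^{(0)}\in\mathbb{R}$ (present only if the block $[-1]$ is present), $v^{(j)}\in\mathbb{R}^2$ for $j=1,\dots,m$ (conforming with the blocks $G_j$), and $v^{(m+1)}\in\mathbb{R}$ (present only if the block $[1]$ is present). ACI($1$): for $k=0,1,2,\dots$: $\widetilde w_k=(A-\alpha_kI)v_k$ with $\alpha_k=v_k^TAv_k$; $w_k=\widetilde w_k/\|\widetilde w_k\|$; $\widetilde v_{k+1}=(A^T-\beta_kI)w_k$ with $\beta_k=w_k^TAw_k$; $v_{k+1}=\widetilde v_{k+1}/\|\widetilde v_{k+1}\|$. $d(A,v)$ is the grade of $v$ w.r.t. $A$ (degree of the monic polynomial $p$ of smallest degree with $p(A)v=0$); $\|\cdot\|$ is the Euclidean norm. *)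

(* Defs.v *)
From HB Require Import structures.
From mathcomp Require Import all_boot all_order all_algebra.
From mathcomp Require Import all_classical all_reals all_analysis.
Set Implicit Arguments. Unset Strict Implicit. Unset Printing Implicit Defensive.
Import Order.TTheory GRing.Theory Num.Theory.
Local Open Scope ring_scope.

(* Dimension n = p + 2m + q, where p (resp. q) says whether the 1x1 block
   [-1] (resp. [1]) is present. *)
Definition dimA (p : bool) (m : nat) (q : bool) : nat := (p + 2 * m + q)%N.

(* Block index of coordinate i (0-based): 0 for the [-1] block,
   j in 1..m for the block G_j, m+1 for the [1] block. *)
Definition blk (p : bool) (m : nat) (i : nat) : nat :=
  if p && (i == 0)%N then 0%N
  else if (i - p < 2 * m)%N then ((i - p) %/ 2).+1 else m.+1.

Definition pos2 (p : bool) (i : nat) : nat := ((i - p) %% 2)%N.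

Definition cext {R : nzRingType} (m : nat) (c : nat -> R) (j : nat) : R :=
  if j == 0%N then -1 else if j == m.+1 then 1 else c j.

(* A = diag([-1], G_1, ..., G_m, [1]) with G_j = [[c_j, s_j], [-s_j, c_j]]. *)
Definition Amat {R : nzRingType} (p : bool) (m : nat) (q : bool) (c s : nat -> R)
  : 'M[R]_(dimA p m q) :=
  \matrix_(i, j)
    if blk p m i != blk p m j then 0
    else let b := blk p m i in
      if b == 0%N then -1
      else if b == m.+1 then 1
      else if pos2 p i == pos2 p j then c b
      else if pos2 p i == 0%N then s b else - s b.

Definition vnorm {R : rcfType} {n : nat} (v : 'cV[R]_n) : R :=
  Num.sqrt (\sum_i (v i 0) ^+ 2).

Definition normalize {R : rcfType} {n : nat} (v : 'cV[R]_n) : 'cV[R]_n :=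
  (vnorm v)^-1 *: v.

(* Rayleigh quotient x^T A x (for unit vectors). *)
Definition rq {R : nzRingType} {n : nat} (A : 'M[R]_n) (x : 'cV[R]_n) : R :=
  ((x^T *m A *m x) 0 0).

(* The block v^(j) of v is nonzero (this entails that block j is present). *)
Definition block_nz {R : nzRingType} (p : bool) (m : nat) (q : bool)
  (v : 'cV[R]_(dimA p m q)) (j : nat) : Prop :=
  exists i : 'I_(dimA p m q), blk p m i = j /\ v i 0 != 0.

Definition poly_mx_app {R : comNzRingType} {n : nat} (A : 'M[R]_n)
  (P : {poly R}) (v : 'cV[R]_n) : 'cV[R]_n :=
  \sum_(i < size P) P`_i *: iter i (fun x => A *m x) v.

Definition annihilates {R : comNzRingType} {n : nat} (A : 'M[R]_n)
  (v : 'cV[R]_n) (P : {poly R}) : Prop :=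
  poly_mx_app A P v = 0.

Definition is_grade {R : comNzRingType} {n : nat} (A : 'M[R]_n) (v : 'cV[R]_n)
  (d : nat) : Prop :=
  (exists P : {poly R}, P \is monic /\ (size P).-1 = d /\ annihilates A v P) /\
  (forall P : {poly R}, P \is monic -> annihilates A v P -> (d <= (size P).-1)%N).

Section ACI.
Variables (R : rcfType) (n : nat) (A : 'M[R]_n).
Definition aci_w (v : 'cV[R]_n) : 'cV[R]_n := normalize ((A - (rq A v)%:M) *m v).
Definition aci_step (v : 'cV[R]_n) : 'cV[R]_n :=
  let w := aci_w v in normalize ((A^T - (rq A w)%:M) *m w).
Fixpoint aci_v (v0 : 'cV[R]_n) (k : nat) : 'cV[R]_n :=
  match k with O => v0 | S k' => aci_step (aci_v v0 k') end.
Definition aci_alpha (v0 : 'cV[R]_n) (k : nat) : R := rq A (aci_v v0 k).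
Definition aci_beta (v0 : 'cV[R]_n) (k : nat) : R := rq A (aci_w (aci_v v0 k)).
End ACI.

(* Main.v *)
Require Import Defs.
From HB Require Import structures.
From mathcomp Require Import all_boot all_order all_algebra.
From mathcomp Require Import all_classical all_reals all_analysis.
From mathcomp Require Import zify.
From mathcomp Require Import ring lra.
Import Order.TTheory GRing.Theory Num.Theory numFieldNormedType.Exports.

Section N.
Variables (p : bool) (m : nat) (q : bool).
Lemma blk_le i : (blk p m i <= m.+1)%N.
Proof. rewrite /blk; case: ifP => // _; case: ifP => // H; lia. Qed.
Lemma blk_uniq i k : (i < dimA p m q)%N -> (k < dimA p m q)%N ->
  blk p m i = blk p m k -> pos2 p i = pos2 p k -> i = k.
Proof.
rewrite /dimA /blk /pos2; case: p; case: q => /=.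
- case: eqP => [->|hi]; case: eqP => [->|hk] //=; try by case: ifP.
  case: ifP => h1; case: ifP => h2 //; try lia.
- case: eqP => [->|hi]; case: eqP => [->|hk] //=; try by case: ifP.
  case: ifP => h1; case: ifP => h2 //; try lia.
- case: ifP => h1; case: ifP => h2 //; try lia.
- case: ifP => h1; case: ifP => h2 //; try lia.
Qed.
Lemma blk1_uniq i k : (i < dimA p m q)%N -> (k < dimA p m q)%N ->
  blk p m i = blk p m k -> (blk p m i == 0)%N || (blk p m i == m.+1) -> i = k.
Proof.
rewrite /dimA /blk; case: p; case: q => /=.
- case: eqP => [->|hi]; case: eqP => [->|hk] //=; try by case: ifP.
  case: ifP => h1; case: ifP => h2 //; try lia.
- case: eqP => [->|hi]; case: eqP => [->|hk] //=; try by case: ifP.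
  case: ifP => h1; case: ifP => h2 //; try lia.
- case: ifP => h1; case: ifP => h2 //; try lia.
- case: ifP => h1; case: ifP => h2 //; try lia.
Qed.
Lemma blk2_inv i b : (1 <= b <= m)%N -> blk p m i = b ->
  i = (p + 2 * b.-1 + pos2 p i)%N.
Proof.
rewrite /blk /pos2; case: p => /=.
- case: eqP => [->|hi] /=; first lia.
  case: ifP => h1; lia.
- case: ifP => h1; lia.
Qed.
Lemma blk2_idx b t : (1 <= b <= m)%N -> (t < 2)%N ->
  [/\ (p + 2 * b.-1 + t < dimA p m q)%N, blk p m (p + 2 * b.-1 + t) = b
    & pos2 p (p + 2 * b.-1 + t) = t].
Proof.
rewrite /dimA /blk /pos2 => hb ht; split.
- case: p; case: q => /=; lia.
- case: p => /=.
  + rewrite ifT; last lia. lia.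
  + rewrite ifT; last lia. lia.
- case: p => /=; lia.
Qed.

Lemma pos2_lt i : (pos2 p i < 2)%N.
Proof. by rewrite /pos2 ltn_mod. Qed.
End N.


Local Open Scope classical_set_scope.
Local Open Scope ring_scope.


Section M.
Variables (R : realType) (p : bool) (m : nat) (q : bool) (c s : nat -> R).
Local Notation n := (dimA p m q).
Local Notation A := (Amat p m q c s).
Local Notation blk := (blk p m).

Definition gam (b : nat) (x : 'cV[R]_n) : R := \sum_(i < n | blk i == b) x i 0 ^+ 2.

Lemma sum_blocks (F : 'I_n -> R) :
  \sum_(i < n) F i = \sum_(b < m.+2) \sum_(i < n | blk i == b) F i.
Proof.
rewrite (partition_big (fun i : 'I_n => (inord (blk i) : 'I_m.+2)) xpredT) //=.
apply: eq_bigr => b _; apply: eq_bigl => i.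
by rewrite -val_eqE /= inordK // ltnS blk_le.
Qed.

Lemma rowsum (M : 'M[R]_n) (x : 'cV[R]_n) (i : 'I_n) :
  (forall i k : 'I_n, blk i != blk k -> M i k = 0) ->
  (M *m x) i 0 = \sum_(k < n | blk k == blk i) M i k * x k 0.
Proof.
move=> HM; rewrite mxE (bigID (fun k : 'I_n => blk k == blk i)) /=.
rewrite [X in _ + X]big1 ?addr0 // => k hk.
by rewrite HM ?mul0r // eq_sym.
Qed.

Lemma A_off (i k : 'I_n) : blk i != blk k -> A i k = 0.
Proof. by move=> h; rewrite mxE h. Qed.
Lemma AT_off (i k : 'I_n) : blk i != blk k -> A^T i k = 0.
Proof. by move=> h; rewrite mxE A_off // eq_sym. Qed.

Definition blockmx (M : 'M[R]_n) (sg : R) : Prop :=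
 [/\ forall i k : 'I_n, blk i != blk k -> M i k = 0,
     forall i : 'I_n, (blk i == 0)%N || (blk i == m.+1) -> M i i = cext m c (blk i) &
     forall i k : 'I_n, blk i = blk k -> (1 <= blk i <= m)%N ->
        M i k = if pos2 p i == pos2 p k then c (blk i)
                else if pos2 p i == 0%N then sg * s (blk i) else - (sg * s (blk i))].

Lemma blockmx_A : blockmx A 1.
Proof.
split.
- exact: A_off.
- move=> i hi; rewrite mxE eqxx /= /cext.
  by case/orP: hi => /eqP ->; rewrite ?eqxx //=; case: ifP.
- move=> i k hik hb; rewrite mxE hik eqxx /=.
  have -> : (blk k == 0)%N = false by rewrite -hik; apply/negbTE; rewrite -lt0n; case/andP: hb.
  have -> : (blk k == m.+1)%N = false.
    by rewrite -hik; apply/negbTE; apply/eqP => E; move: hb; rewrite E ltnn andbF.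
  by rewrite !mul1r.
Qed.

Lemma blockmx_AT : blockmx A^T (-1).
Proof.
have [H0 H1 H2] := blockmx_A.
split.
- exact: AT_off.
- by move=> i hi; rewrite mxE H1.
- move=> i k hik hb; rewrite mxE H2 ?hik //; last by rewrite -hik.
  rewrite [pos2 p k == _]eq_sym -hik.
  case: eqP => // hne.
  have := pos2_lt p i; have := pos2_lt p k.
  case: (pos2 p i) hne => [|[|//]]; case: (pos2 p k) => [|[|//]] //= _ _ _; rewrite ?mul1r ?mulN1r ?opprK //.
Qed.

Lemma row1 (M : 'M[R]_n) sg (HM : blockmx M sg) (x : 'cV[R]_n) (i : 'I_n) :
  (blk i == 0)%N || (blk i == m.+1) -> (M *m x) i 0 = cext m c (blk i) * x i 0.
Proof.
case: HM => H0 H1 H2 hi.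
rewrite rowsum // (big_pred1 i) ?H1 // => k /=.
apply/eqP/eqP => [E|->] //.
apply/val_inj => /=; apply: (blk1_uniq p m q) => //; last by rewrite E.
Qed.

Lemma bsum2 b (i0 i1 : 'I_n) (F : 'I_n -> R) : (1 <= b <= m)%N ->
  val i0 = (p + 2 * b.-1 + 0)%N -> val i1 = (p + 2 * b.-1 + 1)%N ->
  \sum_(k < n | blk k == b) F k = F i0 + F i1.
Proof.
move=> hb e0 e1.
have [_ b0 _] := @blk2_idx p m q b 0 hb isT.
have [_ b1 _] := @blk2_idx p m q b 1 hb isT.
rewrite (bigD1 i0) /=; last by rewrite e0 b0.
rewrite (bigD1 i1) /=; last first.
  by rewrite e1 b1 eqxx /= -val_eqE /= e0 e1 eqn_add2l.
rewrite big1 ?addr0 // => k /andP[/andP[hk hk0] hk1].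
have E := @blk2_inv p m k b hb (eqP hk).
have := pos2_lt p k.
case: (pos2 p k) E => [|[|//]] E _.
- by move: hk0; rewrite -val_eqE /= e0 E eqxx.
- by move: hk1; rewrite -val_eqE /= e1 E eqxx.
Qed.

Lemma row2 (M : 'M[R]_n) sg (HM : blockmx M sg) (x : 'cV[R]_n) b (i0 i1 : 'I_n) :
  (1 <= b <= m)%N ->
  val i0 = (p + 2 * b.-1 + 0)%N -> val i1 = (p + 2 * b.-1 + 1)%N ->
  [/\ blk i0 = b, blk i1 = b,
    (M *m x) i0 0 = c b * x i0 0 + sg * s b * x i1 0 &
    (M *m x) i1 0 = - (sg * s b) * x i0 0 + c b * x i1 0].
Proof.
move=> hb e0 e1.
have [_ b0 p0] := @blk2_idx p m q b 0 hb isT.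
have [_ b1 p1] := @blk2_idx p m q b 1 hb isT.
case: HM => H0 H1 H2.
have bi0 : blk i0 = b by rewrite e0 b0.
have bi1 : blk i1 = b by rewrite e1 b1.
have pi0 : pos2 p i0 = 0%N by rewrite e0 p0.
have pi1 : pos2 p i1 = 1%N by rewrite e1 p1.
split => //.
- rewrite (rowsum _ _ _ H0) bi0 (@bsum2 b i0 i1 _ hb e0 e1).
  by rewrite (H2 i0 i0) ?bi0 // (H2 i0 i1) ?bi0 ?bi1 // pi0 pi1 /=.
- rewrite (rowsum _ _ _ H0) bi1 (@bsum2 b i0 i1 _ hb e0 e1).
  rewrite (H2 i1 i0) ?bi0 ?bi1 // (H2 i1 i1) ?bi1 // pi0 pi1 /=.
  by rewrite mulNr.
Qed.

Lemma idx2 b : (1 <= b <= m)%N -> exists i0 i1 : 'I_n,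
  val i0 = (p + 2 * b.-1 + 0)%N /\ val i1 = (p + 2 * b.-1 + 1)%N.
Proof.
move=> hb.
have [h0 _ _] := @blk2_idx p m q b 0 hb isT.
have [h1 _ _] := @blk2_idx p m q b 1 hb isT.
by exists (Ordinal h0), (Ordinal h1).
Qed.

Lemma cext2 b : (1 <= b <= m)%N -> cext m c b = c b.
Proof.
move=> /andP[h1 h2]; rewrite /cext ifF; last by apply/eqP => E; rewrite E in h1.
by rewrite ifF //; apply/eqP => E; rewrite E ltnn in h2.
Qed.

Lemma not1blk b : (b < m.+2)%N -> ~~ ((b == 0)%N || (b == m.+1)) -> (1 <= b <= m)%N.
Proof. move=> h1 h2; apply/andP; split; lia. Qed.

Lemma LA (M : 'M[R]_n) sg (HM : blockmx M sg) (x : 'cV[R]_n) b : (b < m.+2)%N ->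
  \sum_(i < n | blk i == b) x i 0 * (M *m x) i 0 = cext m c b * gam b x.
Proof.
move=> hb; rewrite /gam mulr_sumr.
case: (boolP ((b == 0)%N || (b == m.+1))) => hb1.
  apply: eq_bigr => i /eqP hi.
  by rewrite (row1 _ _ HM) ?hi // mulrCA expr2.
have hb2 := not1blk _ hb hb1.
have [i0 [i1 [e0 e1]]] := idx2 _ hb2.
have [bi0 bi1 r0 r1] := row2 _ _ HM x _ _ _ hb2 e0 e1.
rewrite !(@bsum2 b i0 i1 _ hb2 e0 e1) r0 r1 cext2 //.
ring.
Qed.

Lemma cext1 b : (b == 0)%N || (b == m.+1) -> cext m c b ^+ 2 = 1.
Proof. by rewrite /cext; case/orP => /eqP ->; rewrite ?eqxx /=; [rewrite sqrrN expr1n|rewrite expr1n]. Qed.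

Lemma LB (M : 'M[R]_n) sg (HM : blockmx M sg) (hsg : sg ^+ 2 = 1)
  (Hcs : forall b, (1 <= b <= m)%N -> c b ^+ 2 + s b ^+ 2 = 1)
  (x : 'cV[R]_n) (a : R) b : (b < m.+2)%N ->
  \sum_(i < n | blk i == b) ((M *m x) i 0 - a * x i 0) ^+ 2
    = (1 - 2 * a * cext m c b + a ^+ 2) * gam b x.
Proof.
move=> hb; rewrite /gam mulr_sumr.
case: (boolP ((b == 0)%N || (b == m.+1))) => hb1.
  have hc := cext1 _ hb1.
  apply: eq_bigr => i /eqP hi.
  rewrite (row1 _ _ HM) ?hi //.
  transitivity ((cext m c b ^+ 2 - 2 * a * cext m c b + a ^+ 2) * x i 0 ^+ 2); first by ring.
  by rewrite hc.
have hb2 := not1blk _ hb hb1.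
have [i0 [i1 [e0 e1]]] := idx2 _ hb2.
have [bi0 bi1 r0 r1] := row2 _ _ HM x _ _ _ hb2 e0 e1.
rewrite !(@bsum2 b i0 i1 _ hb2 e0 e1) r0 r1 cext2 //.
have key : (c b - a) ^+ 2 + s b ^+ 2 = 1 - 2 * a * c b + a ^+ 2.
  by have := Hcs b hb2; lra.
transitivity (((c b - a) ^+ 2 + sg ^+ 2 * s b ^+ 2) * (x i0 0 ^+ 2 + x i1 0 ^+ 2)); first by ring.
by rewrite hsg mul1r key mulrDr.
Qed.

Lemma gam_ge0 b (x : 'cV[R]_n) : 0 <= gam b x.
Proof. by apply: sumr_ge0 => i _; apply: sqr_ge0. Qed.

Lemma gam_sum (x : 'cV[R]_n) : \sum_(b < m.+2) gam b x = \sum_(i < n) x i 0 ^+ 2.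
Proof. by rewrite sum_blocks. Qed.

Lemma vnorm2 (x : 'cV[R]_n) : vnorm x ^+ 2 = \sum_(i < n) x i 0 ^+ 2.
Proof. by rewrite /vnorm sqr_sqrtr // sumr_ge0 // => i _; apply: sqr_ge0. Qed.

Lemma rq_gam (M : 'M[R]_n) sg (HM : blockmx M sg) (x : 'cV[R]_n) :
  rq M x = \sum_(b < m.+2) cext m c b * gam b x.
Proof.
rewrite /rq -mulmxA mxE.
under eq_bigr do rewrite mxE.
rewrite sum_blocks; apply: eq_bigr => b _.
exact: (LA _ _ HM).
Qed.

Lemma gam_scale b (k : R) (x : 'cV[R]_n) : gam b (k *: x) = k ^+ 2 * gam b x.
Proof.
rewrite /gam mulr_sumr; apply: eq_bigr => i _; rewrite mxE; exact: exprMn.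
Qed.

Lemma gam_step (M : 'M[R]_n) sg (HM : blockmx M sg) (hsg : sg ^+ 2 = 1)
  (Hcs : forall b, (1 <= b <= m)%N -> c b ^+ 2 + s b ^+ 2 = 1)
  (x : 'cV[R]_n) (a : R) b : (b < m.+2)%N ->
  gam b ((M - a%:M) *m x) = (1 - 2 * a * cext m c b + a ^+ 2) * gam b x.
Proof.
move=> hb; rewrite -(@LB M sg HM hsg Hcs x a b hb) /gam.
apply: eq_bigr => i _.
by rewrite mulmxBl mul_scalar_mx !mxE.
Qed.

Lemma step_gam (M : 'M[R]_n) sg (HM : blockmx M sg) (hsg : sg ^+ 2 = 1)
  (Hcs : forall b, (1 <= b <= m)%N -> c b ^+ 2 + s b ^+ 2 = 1)
  (x : 'cV[R]_n) (a : R) :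
  \sum_(b < m.+2) gam b x = 1 -> a = \sum_(b < m.+2) cext m c b * gam b x ->
  -1 < a < 1 ->
  forall b, (b < m.+2)%N ->
  gam b (normalize ((M - a%:M) *m x)) = (1 - 2 * a * cext m c b + a ^+ 2) / (1 - a ^+ 2) * gam b x.
Proof.
move=> h1 ha /andP[ha1 ha2] b hb.
set y := (M - a%:M) *m x.
have ny : vnorm y ^+ 2 = 1 - a ^+ 2.
  rewrite vnorm2 -gam_sum.
  transitivity (\sum_(b < m.+2) ((1 + a ^+ 2) * gam b x - (2 * a) * (cext m c b * gam b x))).
    apply: eq_bigr => b' _; rewrite /y (@gam_step M sg HM hsg Hcs) //; ring.
  rewrite sumrB -!mulr_sumr h1 -ha; ring.
rewrite /normalize gam_scale exprVn ny /y (@gam_step M sg HM hsg Hcs) //.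
by rewrite mulrA [(1 - a ^+ 2)^-1 * _]mulrC.
Qed.
End M.

Section S.
Variable R : realType.
Lemma dlnP (P : {poly R}) (x : R) : 0 < P.[x] ->
  is_derive x 1 (fun a => ln P.[a]) ((deriv P).[x] / P.[x]).
Proof.
move=> Px.
have := is_derive1_comp (is_derive1_ln Px) (is_derive_poly P x).
by rewrite mulrC.
Qed.
Lemma dsub (f g : R -> R) (x df dg : R) : is_derive x 1 f df -> is_derive x 1 g dg ->
  is_derive x 1 (fun a => f a - g a) (df - dg).
Proof. move=> H1 H2. exact: (is_deriveB H1 H2). Qed.
Lemma dadd (f g : R -> R) (x df dg : R) : is_derive x 1 f df -> is_derive x 1 g dg ->
  is_derive x 1 (fun a => f a + g a) (df + dg).
Proof. move=> H1 H2. exact: (is_deriveD H1 H2). Qed.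
Lemma dscal (f : R -> R) (k x df : R) : is_derive x 1 f df ->
  is_derive x 1 (fun a => k * f a) (k * df).
Proof. move=> H1. exact: (is_deriveZ k H1). Qed.

Definition PQ (c : R) : {poly R} := 1 - (2 * c) *: 'X + 'X^2.
Definition P2 : {poly R} := 1 - 'X^2.
Definition P3 : {poly R} := 1 + 'X.
Definition P4 : {poly R} := 1 - 'X.
Definition P5 : {poly R} := 'X^2.

Definition Ff (c : R) (a : R) : R :=
  ln (PQ c).[a] - ln P2.[a] + c * (ln P3.[a] - ln P4.[a]) - ((1 - c^+2)/2) * P5.[a].

Lemma PQE c a : (PQ c).[a] = 1 - 2 * a * c + a ^+ 2.
Proof. rewrite /PQ !hornerE; ring. Qed.
Lemma P2E a : P2.[a] = 1 - a ^+ 2. Proof. by rewrite /P2 !hornerE. Qed.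
Lemma P3E a : P3.[a] = 1 + a. Proof. by rewrite /P3 !hornerE. Qed.
Lemma P4E a : P4.[a] = 1 - a. Proof. by rewrite /P4 !hornerE. Qed.
Lemma P5E a : P5.[a] = a ^+ 2. Proof. by rewrite /P5 !hornerE. Qed.
Lemma dPQE c a : (deriv (PQ c)).[a] = 2 * a - 2 * c.
Proof. rewrite /PQ !poly.derivE !hornerE. rewrite -[X in X = _]/(- (2 * c) + a + a); ring. Qed.
Lemma dP2E a : (deriv P2).[a] = - (2 * a). Proof. rewrite /P2 !poly.derivE ?hornerE; try ring. Qed.
Lemma dP3E a : (deriv P3).[a] = 1. Proof. rewrite /P3 !poly.derivE ?hornerE; try ring. Qed.
Lemma dP4E a : (deriv P4).[a] = - 1. Proof. rewrite /P4 !poly.derivE ?hornerE; try ring. Qed.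
Lemma dP5E a : (deriv P5).[a] = 2 * a. Proof. rewrite /P5 !poly.derivE ?hornerE; try ring. Qed.

Lemma PQ_gt0 (c a : R) : c ^+ 2 <= 1 -> -1 < a < 1 -> 0 < 1 - 2 * a * c + a ^+ 2.
Proof.
move=> hc /andP[h1 h2]. have h3 : a ^+ 2 * c ^+ 2 <= a ^+ 2 by nra.
have h4 : 0 < (1 - a ^+ 2) ^+ 2 by apply: exprn_gt0; nra.
rewrite ltNge; apply/negP => h5.
have h6 : 1 + a ^+ 2 <= 2 * a * c by lra.
have h7 : 0 <= 1 + a ^+ 2 by nra.
have h8 : (1 + a ^+ 2) ^+ 2 <= (2 * a * c) ^+ 2 by rewrite ler_sqr ?nnegrE; nra.
nra.
Qed.

Definition dF (c x : R) : R :=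
  (2 * x - 2 * c) / (1 - 2 * x * c + x ^+ 2) - (- (2 * x)) / (1 - x ^+ 2)
  + c * (1 / (1 + x) - (- 1) / (1 - x)) - ((1 - c^+2)/2) * (2 * x).

Lemma dFf (c x : R) : c ^+ 2 <= 1 -> -1 < x < 1 -> is_derive x 1 (Ff c) (dF c x).
Proof.
move=> hc hx; have hQ := @PQ_gt0 c x hc hx.
case/andP: hx => h1 h2.
rewrite /Ff.
apply: is_derive_eq.
  apply: dsub.
  apply: dadd; [apply: dsub; apply: dlnP|apply: dscal; apply: dsub; apply: dlnP].
  - by rewrite PQE.
  - rewrite P2E; nra.
  - rewrite P3E; lra.
  - rewrite P4E; lra.
rewrite /dF PQE P2E P3E P4E dPQE dP2E dP3E dP4E.
by rewrite dP5E.
Qed.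

Lemma dF_sign (c x : R) : c ^+ 2 <= 1 -> -1 < x < 1 -> 0 <= x * dF c x.
Proof.
move=> hc hx; have hQ := @PQ_gt0 c x hc hx.
case/andP: hx => h1 h2.
have h3 : 0 < 1 - x ^+ 2 by nra.
have h4 : 0 < 1 + x by lra.
have h5 : 0 < 1 - x by lra.
have -> : x * dF c x = x ^+ 2 * (1 - c ^+ 2) * (4 - (1 - 2 * x * c + x ^+ 2) * (1 - x ^+ 2))
   / ((1 - 2 * x * c + x ^+ 2) * (1 - x ^+ 2)).
  rewrite /dF. field.
  apply/and4P; split; apply/negP => /eqP H; nra.
apply: divr_ge0; last nra.
apply: mulr_ge0; first nra.
have : (1 - 2 * x * c + x ^+ 2) <= 4 by nra.
nra.
Qed.

Lemma Ff0 c : Ff c 0 = 0.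
Proof. by rewrite /Ff PQE P2E P3E P4E P5E !(expr0n, mulr0, mul0r, subr0, addr0) ln1; lra. Qed.

Lemma Ff_ge0 (c a : R) : c ^+ 2 <= 1 -> -1 < a < 1 -> 0 <= Ff c a.
Proof.
move=> hc /andP[h1 h2].
have der : forall x : R, -1 < x < 1 -> is_derive x 1 (Ff c) (dF c x).
  by move=> x hx; apply: dFf.
have [ha|ha|<-] := ltgtP 0 a; last by rewrite Ff0.
- have [xi hxi E] : exists2 xi, xi \in `]0, a[%R & Ff c a - Ff c 0 = dF c xi * (a - 0).
    apply: MVT => //.
      move=> x; rewrite in_itv /= => /andP[hx1 hx2]; apply: der; apply/andP; split; lra.
    apply: (derivable_within_continuous (i := `[_, _]%R)) => x; rewrite in_itv /= => /andP[hx1 hx2].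
    apply: (@ex_derive _ _ _ _ _ _ (dF c x)); apply: der; apply/andP; split; lra.
  move: hxi; rewrite in_itv /= => /andP[hx1 hx2].
  have hs := @dF_sign c xi hc.
  have : 0 <= dF c xi.
    have : 0 <= xi * dF c xi by apply: hs; apply/andP; split; lra.
    by rewrite pmulr_rge0.
  move: E; rewrite Ff0 subr0 => ->. move=> hd. apply: mulr_ge0 => //; lra.
- have [xi hxi E] : exists2 xi, xi \in `]a, 0[%R & Ff c 0 - Ff c a = dF c xi * (0 - a).
    apply: MVT => //.
      move=> x; rewrite in_itv /= => /andP[hx1 hx2]; apply: der; apply/andP; split; lra.
    apply: (derivable_within_continuous (i := `[_, _]%R)) => x; rewrite in_itv /= => /andP[hx1 hx2].
    apply: (@ex_derive _ _ _ _ _ _ (dF c x)); apply: der; apply/andP; split; lra.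
  move: hxi; rewrite in_itv /= => /andP[hx1 hx2].
  have hs := @dF_sign c xi hc.
  have : dF c xi <= 0.
    have : 0 <= xi * dF c xi by apply: hs; apply/andP; split; lra.
    by rewrite nmulr_rge0.
  move: E; rewrite Ff0 sub0r => E hd.
  have : - Ff c a <= 0 by rewrite E; apply: mulr_le0_ge0 => //; lra.
  lra.
Qed.

Lemma sq_bounded_cvg0 (a : nat -> R) (K : R) :
  (forall t, \sum_(0 <= s < t) a s ^+ 2 <= K) -> a @ \oo --> 0.
Proof.
move=> H.
have hs : (fun s => a s ^+ 2) @ \oo --> 0.
  apply: cvg_series_cvg_0. apply: nondecreasing_is_cvgn.
  - apply/nondecreasing_seqP => n. rewrite /series /= big_nat_recr //= lerDl sqr_ge0 //.
  - by exists K => _ [n _ <-]; apply: H.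
apply/cvgr0Pnorm_lt => e he.
move/cvgr0Pnorm_lt: hs => /(_ (e ^+ 2) (exprn_gt0 2 he)). apply: filterS => t.
rewrite ger0_norm ?sqr_ge0 // => h.
have h1 : `|a t| ^+ 2 = a t ^+ 2 by rewrite -normrX ger0_norm ?sqr_ge0.
have h2 := normr_ge0 (a t).
nra.
Qed.

Lemma lam_aux (u e : R) : 0 < u -> u <= e -> 0 < u / e /\ u / e <= 1.
Proof.
move=> hu hue; have he : 0 < e by lra.
split; first exact: divr_gt0.
by rewrite ler_pdivrMr // mul1r.
Qed.

Lemma lam_props (cl cj : R) : cl ^+ 2 < 1 -> cj ^+ 2 <= 1 -> cl * cj <= 0 ->
  exists lam : R, [/\ 0 <= lam, lam <= 1, lam * cl + (1 - lam) * cj = 0 &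
     0 < lam * (1 - cl ^+ 2) + (1 - lam) * (1 - cj ^+ 2)].
Proof.
move=> hl hj hlj.
have [z|nz] := eqVneq cl 0.
  exists 1; rewrite z; split; lra.
have [zj|nzj] := eqVneq cj 0.
  exists 0; rewrite zj; split; lra.
have [pl|nl] := ltP 0 cl.
  have cjn : cj < 0.
    rewrite lt_neqAle nzj /=. nra.
  have [h1 h2] := @lam_aux (- cj) (cl - cj) ltac:(lra) ltac:(lra).
  exists (- cj / (cl - cj)); split; [lra|lra| |].
    field; apply/eqP => E; lra.
  have h3 : 0 < - cj / (cl - cj) * (1 - cl ^+ 2) by apply: mulr_gt0 => //; lra.
  have h4 : 0 <= (1 - - cj / (cl - cj)) * (1 - cj ^+ 2) by apply: mulr_ge0; lra.
  lra.
have cln : cl < 0 by rewrite lt_neqAle nz nl.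
have cjp : 0 < cj.
  rewrite lt_neqAle eq_sym nzj /=. nra.
have [h1 h2] := @lam_aux cj (cj - cl) ltac:(lra) ltac:(lra).
exists (cj / (cj - cl)); split; [lra|lra| |].
  field; apply/eqP => E; lra.
have h3 : 0 < cj / (cj - cl) * (1 - cl ^+ 2) by apply: mulr_gt0 => //; lra.
have h4 : 0 <= (1 - cj / (cj - cl)) * (1 - cj ^+ 2) by apply: mulr_ge0; lra.
lra.
Qed.
Lemma abstract_cvg (N : nat) (cb : nat -> R) (g : nat -> nat -> R) (a : nat -> R)
  (l j : nat) :
  (forall b, (b < N)%N -> cb b ^+ 2 <= 1) ->
  (forall t b, (b < N)%N -> 0 <= g t b) ->
  (forall t, \sum_(b < N) g t b = 1) ->
  (forall t, -1 < a t < 1) ->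
  (forall t b, (b < N)%N ->
     g t.+1 b = (1 - 2 * a t * cb b + a t ^+ 2) / (1 - a t ^+ 2) * g t b) ->
  (l < N)%N -> (j < N)%N -> 0 < g 0%N l -> 0 < g 0%N j ->
  cb l ^+ 2 < 1 -> cb l * cb j <= 0 ->
  a @ \oo --> 0.
Proof.
move=> Hc Hg0 Hg1 Ha Hrec hl hj gl0 gj0 cl clj.
have rpos : forall t b, (b < N)%N -> 0 < (1 - 2 * a t * cb b + a t ^+ 2) / (1 - a t ^+ 2).
  move=> t b hb; have := Ha t => /andP[h1 h2].
  apply: divr_gt0; first exact: PQ_gt0 _ _ (Hc b hb) (Ha t).
  Timeout 20 nra.
have pos : forall b, (b < N)%N -> 0 < g 0%N b -> forall t, 0 < g t b.
  move=> b hb h0; elim=> [//|t IH]; rewrite Hrec //; exact: mulr_gt0 (rpos t b hb) IH.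
have le1 : forall t b, (b < N)%N -> g t b <= 1.
  move=> t b hb; rewrite -(Hg1 t) (bigD1 (Ordinal hb)) //= lerDl.
  by apply: sumr_ge0 => i _; apply: Hg0.
have lnrec : forall b, (b < N)%N -> 0 < g 0%N b -> forall t,
    ln (g t.+1 b) = ln (g t b) + (ln (1 - 2 * a t * cb b + a t ^+ 2) - ln (1 - a t ^+ 2)).
  move=> b hb h0 t; have := Ha t => /andP[h1 h2].
  have hQ := PQ_gt0 _ _ (Hc b hb) (Ha t).
  have gp := pos b hb h0 t; have rp := rpos t b hb.
  have hP : 0 < 1 - a t ^+ 2 by nra.
  rewrite Hrec // lnM ?posrE // addrC ln_div ?posrE //.
have [lam [lam0 lam1 lamc kap0]] := lam_props _ _ cl (Hc j hj) clj.
set kap := lam * (1 - cb l ^+ 2) + (1 - lam) * (1 - cb j ^+ 2) in kap0.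
pose L t := lam * ln (g t l) + (1 - lam) * ln (g t j).
have step : forall t, L t + kap / 2 * a t ^+ 2 <= L t.+1.
  move=> t; rewrite /L (lnrec l) // (lnrec j) //.
  have Fl := Ff_ge0 _ _ (Hc l hl) (Ha t); have Fj := Ff_ge0 _ _ (Hc j hj) (Ha t).
  move: Fl Fj; rewrite /Ff !PQE !P2E !P3E !P4E !P5E.
  set X := ln (1 + a t) - ln (1 - a t).
  move=> Fl Fj.
  have hl1 : 0 <= 1 - lam by lra.
  have F1 := mulr_ge0 lam0 Fl; have F2 := mulr_ge0 hl1 Fj.
  have E : lam * cb l * X + (1 - lam) * cb j * X = 0.
    by rewrite -mulrDl lamc mul0r.
  rewrite /kap. nra.
have Lle0 : forall t, L t <= 0.
  move=> t; rewrite /L.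
  have h1 : ln (g t l) <= 0 by apply: ln_le0; apply: le1.
  have h2 : ln (g t j) <= 0 by apply: ln_le0; apply: le1.
  have hl1 : 0 <= 1 - lam by lra.
  nra.
have sumb : forall t, L 0%N + kap / 2 * \sum_(0 <= s < t) a s ^+ 2 <= L t.
  elim=> [|t IH]; first by rewrite big_geq // mulr0 addr0.
  rewrite big_nat_recr //= mulrDr addrA.
  have := step t; lra.
apply: (@sq_bounded_cvg0 a (- L 0%N / (kap / 2))) => t.
have hk : 0 < kap / 2 by lra.
rewrite ler_pdivlMr //.
have := sumb t; have := Lle0 t. rewrite mulrC. lra.
Qed.

End S.

Lemma abs_lt1 (R : realType) (N : nat) (cb : nat -> R) (g : nat -> R) (l : nat) :
  (forall b, (b < N)%N -> cb b ^+ 2 <= 1) ->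
  (forall b, (b < N)%N -> 0 <= g b) ->
  \sum_(b < N) g b = 1 -> (l < N)%N -> 0 < g l -> cb l ^+ 2 < 1 ->
  -1 < \sum_(b < N) cb b * g b < 1.
Proof.
move=> Hc Hg0 h1 hl gl cl.
have hcl1 : cb l < 1 by nra.
have hcl2 : -1 < cb l by nra.
have E1 : 1 - \sum_(b < N) cb b * g b = \sum_(b < N) (1 - cb b) * g b.
  by rewrite -{1}h1 -sumrB; apply: eq_bigr => b _; ring.
have E2 : 1 + \sum_(b < N) cb b * g b = \sum_(b < N) (1 + cb b) * g b.
  by rewrite -{1}h1 -big_split; apply: eq_bigr => b _ /=; ring.
have P1 : (1 - cb l) * g l <= \sum_(b < N) (1 - cb b) * g b.
  rewrite (bigD1 (Ordinal hl)) //= lerDl; apply: sumr_ge0 => b _.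
  apply: mulr_ge0; last exact: Hg0.
  have := Hc b (ltn_ord b); nra.
have P2 : (1 + cb l) * g l <= \sum_(b < N) (1 + cb b) * g b.
  rewrite (bigD1 (Ordinal hl)) //= lerDl; apply: sumr_ge0 => b _.
  apply: mulr_ge0; last exact: Hg0.
  have := Hc b (ltn_ord b); nra.
have Q1 : 0 < (1 - cb l) * g l by apply: mulr_gt0; lra.
have Q2 : 0 < (1 + cb l) * g l by apply: mulr_gt0; lra.
apply/andP; split; lra.
Qed.

Lemma sum_rec (R : realType) (N : nat) (cb : nat -> R) (g : nat -> R) (a : R) :
  \sum_(b < N) g b = 1 -> a = \sum_(b < N) cb b * g b -> -1 < a < 1 ->
  \sum_(b < N) (1 - 2 * a * cb b + a ^+ 2) / (1 - a ^+ 2) * g b = 1.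
Proof.
move=> h1 ha /andP[ha1 ha2].
have hP : 1 - a ^+ 2 != 0 by apply/eqP => E; nra.
transitivity ((1 - a ^+ 2)^-1 * (\sum_(b < N) ((1 + a ^+ 2) * g b - (2 * a) * (cb b * g b)))).
  rewrite mulr_sumr; apply: eq_bigr => b _; field; exact: hP.
rewrite sumrB -!mulr_sumr h1 -ha; field; exact: hP.
Qed.

Lemma subseq_cvg0 (R : realType) (a : nat -> R) (f : nat -> nat) :
  (forall k, (k <= f k)%N) -> a @ \oo --> 0 -> (fun k => a (f k)) @ \oo --> 0.
Proof.
move=> hf H.
apply/cvgr0Pnorm_lt => e he.
have := (cvgr0Pnorm_lt a).1 H e he.
case=> N _ HN; exists N => // k /= hk; apply: HN => /=.
exact: leq_trans hk (hf k).
Qed.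

Theorem lemma4p9 (R : realType) (m : nat) (p q : bool) (c s : nat -> R)
  (v0 : 'cV[R]_(dimA p m q)) :
  (1 <= m)%N ->
  (forall j, (1 <= j <= m)%N -> c j ^+ 2 + s j ^+ 2 = 1) ->
  (forall j, (1 <= j <= m)%N -> s j != 0) ->
  (forall j, (j <= m)%N -> cext m c j < cext m c j.+1) ->
  vnorm v0 = 1 ->
  (exists d, is_grade (Amat p m q c s) v0 d /\ (2 <= d)%N) ->
  (exists l, [/\ (1 <= l <= m)%N, block_nz v0 l &
     exists j, [/\ (j <= m.+1)%N, block_nz v0 j & cext m c l * cext m c j <= 0]]) ->
  ((fun k => aci_alpha (Amat p m q c s) v0 k) @ \oo --> (0:R)) /\
  ((fun k => aci_beta (Amat p m q c s) v0 k) @ \oo --> (0:R)).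
Proof.
move=> hm Hcs Hs _ hv _ [l [hl nzl [j [hj nzj hlj]]]].
set A := Amat p m q c s.
pose u t := if odd t then aci_w A (aci_v A v0 t./2) else aci_v A v0 t./2.
pose g t b := gam R p m q b (u t).
pose a t := rq A (u t).
have HA := blockmx_A R p m q c s.
have HAT := blockmx_AT R p m q c s.
have cb1 : forall b, (b < m.+2)%N -> cext m c b ^+ 2 <= 1.
  move=> b hb; case: (boolP ((b == 0)%N || (b == m.+1))) => h.
    by rewrite cext1.
  have hb2 := not1blk _ _ hb h.
  rewrite cext2 //; have := Hcs b hb2; have := sqr_ge0 (s b); lra.
have cl : cext m c l ^+ 2 < 1.
  rewrite cext2 //; have := Hcs l hl; have : 0 < s l ^+ 2.
    by rewrite lt0r sqr_ge0 sqrf_eq0 Hs.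
  lra.
have bnz : forall b, block_nz v0 b -> 0 < gam R p m q b v0.
  move=> b [i [hi hnz]]; rewrite /gam (bigD1 i) /=; last by rewrite hi.
  have h1 : 0 < v0 i 0 ^+ 2 by rewrite lt0r sqr_ge0 sqrf_eq0 hnz.
  apply: (lt_le_trans h1); rewrite lerDl.
  by apply: sumr_ge0 => k _; apply: sqr_ge0.
have ha_def : forall t, a t = \sum_(b < m.+2) cext m c b * g t b.
  by move=> t; rewrite /a (@rq_gam R p m q c s _ _ HA).
have urec : forall t, exists M sg, [/\ blockmx R p m q c s M sg, sg ^+ 2 = 1 &
    u t.+1 = normalize ((M - (a t)%:M) *m u t)].
  move=> t; rewrite /u /a.
  case: (boolP (odd t)) => ho.
    rewrite /= ho /= uphalf_half ho /=.
    exists A^T, (-1); split => //; first by rewrite expr2 mulN1r opprK.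
    by rewrite add0n /aci_step /u ho.
  rewrite /= ho /= uphalf_half (negbTE ho) /= add0n /u (negbTE ho).
  exists A, 1; split => //; by rewrite expr1n.
have hl' : (l < m.+2)%N by case/andP: hl => _ h; rewrite ltnS leqW.
have hj' : (j < m.+2)%N by [].
have Ha_t : forall t, \sum_(b < m.+2) g t b = 1 -> 0 < g t l -> -1 < a t < 1.
  move=> t h1 h2; rewrite ha_def.
  apply: (@abs_lt1 R m.+2 (cext m c) (g t) l cb1 _ h1 hl' h2 cl) => b _.
  exact: gam_ge0.
have Hrec_t : forall t, \sum_(b < m.+2) g t b = 1 -> 0 < g t l -> forall b, (b < m.+2)%N ->
   g t.+1 b = (1 - 2 * a t * cext m c b + a t ^+ 2) / (1 - a t ^+ 2) * g t b.
  move=> t h1 h2 b hb; have [M [sg [HM hsg E]]] := urec t; rewrite /g E.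
  exact: (@step_gam R p m q c s M sg HM hsg Hcs (u t) (a t) h1 (ha_def t) (Ha_t t h1 h2) b hb).
have inv : forall t, \sum_(b < m.+2) g t b = 1 /\ 0 < g t l.
  elim=> [|t [IH1 IH2]].
    split; last exact: bnz.
    by rewrite /g /u /= gam_sum -vnorm2 hv expr1n.
  split.
    under eq_bigr => b _ do rewrite (Hrec_t t IH1 IH2 b (ltn_ord b)).
    exact: (@sum_rec R m.+2 (cext m c) (g t) (a t) IH1 (ha_def t) (Ha_t t IH1 IH2)).
  rewrite (Hrec_t t IH1 IH2 l hl').
  apply: mulr_gt0 => //; apply: divr_gt0.
    by apply: PQ_gt0; [exact: cb1 | exact: Ha_t].
  have := Ha_t t IH1 IH2; case/andP => h1 h2; nra.
have cvga : a @ \oo --> 0.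
  apply: (@abstract_cvg R m.+2 (cext m c) g a l j cb1) => //.
  - by move=> t b _; apply: gam_ge0.
  - by move=> t; case: (inv t).
  - by move=> t; case: (inv t) => h1 h2; apply: Ha_t.
  - by move=> t; case: (inv t) => h1 h2; apply: Hrec_t.
  - exact: bnz.
  - exact: bnz.
split.
  have -> : (fun k => aci_alpha A v0 k) = (fun k => a k.*2).
    by apply/funext => k; rewrite /a /u odd_double doubleK.
  by apply: (@subseq_cvg0 R a (fun k => k.*2)) => // k; rewrite -addnn leq_addr.
have -> : (fun k => aci_beta A v0 k) = (fun k => a k.*2.+1).
  by apply/funext => k; rewrite /a /u /= odd_double /= uphalf_double.
by apply: (@subseq_cvg0 R a (fun k => k.*2.+1)) => // k; rewrite -addnn leqW // leq_addr.
Qed.
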